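(* For any boolean $v\in\mathfrak{S}_n$, we have $n-\lambda_1(v)\le\textsf{run}(v)$. In particular, $\lambda_2(v)\le\textsf{run}(v)$.
   Context: $\sigma_i=(i,i+1)$; reduced words are sequences of subscripts of reduced expressions. A permutation is boolean if its reduced words have no repeated letters. A run is a sequence of consecutive integers that is increasing or decreasing (single letters allowed); $\textsf{run}(v)$ is the fewest number of runs whose concatenation is a reduced word for $v$. $\lambda_i(v)$ is the length of the $i$-th row of the Robinson–Schensted shape of $v$ (zero if absent). *)

(* Defs.v *)
From mathcomp Require Import all_boot all_fingroup.
Set Implicit Arguments. Unset Strict Implicit. Unset Printing Implicit Defensive.

(* Permutations of [n] = {1,...,n} are modelled as v : 'S_n, where the
   position k in [n] corresponds to the ordinal k-1 : 'I_n. *)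

(* The simple transposition sigma_i = (i, i+1) acting on 0-indexed
   positions: it swaps i-1 and i. *)
Definition sfun (i : nat) (x : nat) : nat :=
  if x == i.-1 then i else if x == i then i.-1 else x.

Definition word_fun (w : seq nat) : nat -> nat :=
  foldr (fun a f => sfun a \o f) id w.

Definition represents (n : nat) (w : seq nat) (v : 'S_n) : Prop :=
  all (fun a => (0 < a) && (a < n)) w /\
  forall x : 'I_n, word_fun w (val x) = val (v x).

Definition reduced_word (n : nat) (w : seq nat) (v : 'S_n) : Prop :=
  represents w v /\ forall w', represents w' v -> size w <= size w'.

Definition is_boolean (n : nat) (v : 'S_n) : Prop :=
  forall w, reduced_word w v -> uniq w.

Definition is_run (s : seq nat) : Prop :=
  exists a k, 0 < k /\ (s = iota a k \/ s = rev (iota a k)).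

Definition is_run_number (n : nat) (v : 'S_n) (k : nat) : Prop :=
  (exists rs : seq (seq nat),
      (forall r, r \in rs -> is_run r) /\ reduced_word (flatten rs) v /\
      size rs = k) /\
  (forall rs : seq (seq nat),
      (forall r, r \in rs -> is_run r) -> reduced_word (flatten rs) v ->
      k <= size rs).

Fixpoint rowins (x : nat) (r : seq nat) : option nat * seq nat :=
  match r with
  | [::] => (None, [:: x])
  | y :: r' => if x < y then (Some y, x :: r')
               else let: (b, r'') := rowins x r' in (b, y :: r'')
  end.

Fixpoint tabins (x : nat) (t : seq (seq nat)) : seq (seq nat) :=
  match t with
  | [::] => [:: [:: x]]
  | r :: t' => let: (b, r') := rowins x r in
               match b with
               | None => r' :: t'
               | Some y => r' :: tabins y t'
               end
  end.

Definition RS_P (w : seq nat) : seq (seq nat) := foldl (fun t x => tabins x t) [::] w.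

Definition RS_shape (n : nat) (v : 'S_n) : seq nat :=
  map size (RS_P [seq val (v j) | j <- enum 'I_n]).

(* lambda_i(v), 1-indexed rows; zero if the row is absent. *)
Definition lambda (n : nat) (v : 'S_n) (i : nat) : nat := nth 0 (RS_shape v) i.-1.

(* Main.v *)
Require Import Defs.
From mathcomp Require Import all_boot all_fingroup zify.

Lemma rowins_mem x r z : z \in (rowins x r).2 -> (z == x) || (z \in r).
Proof.
elim: r => [|y r IH] /=; first by rewrite !inE orbF.
case: ifP => _ /=.
  by rewrite !inE; case/orP=> ->; rewrite ?orbT.
case: (rowins x r) IH => b r'' /= IH.
rewrite !inE; case/orP => [->|/IH]; first by rewrite orbT.
by case/orP=> ->; rewrite ?orbT.
Qed.

Lemma rowins_sorted x r : sorted leq r -> sorted leq (rowins x r).2.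
Proof.
elim: r => [|y r IH] //= Hs.
have Hr : sorted leq r by apply: (path_sorted Hs).
have Hall : all (leq y) r by rewrite (path_sortedE leq_trans) in Hs; case/andP: Hs.
case: ifP => Hxy /=.
  rewrite (path_sortedE leq_trans) Hr andbT.
  apply/allP=> z Hz; move/allP: Hall => /(_ z Hz); lia.
have := IH Hr; have Hm := rowins_mem x r.
case: (rowins x r) Hm => b r'' /= Hm Hs''.
rewrite (path_sortedE leq_trans) Hs'' andbT.
apply/allP=> z /Hm /orP [/eqP ->|Hz]; first lia.
by move/allP: Hall => /(_ z Hz).
Qed.

Lemma rowins_le x r : size r <= size (rowins x r).2 /\
  forall i, i < size r -> nth 0 (rowins x r).2 i <= nth 0 r i.
Proof.
elim: r => [|y r [IH1 IH2]] //=.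
case: ifP => Hxy /=.
  split=> // -[|i] //= _; lia.
case: (rowins x r) IH1 IH2 => b r'' /= IH1 IH2.
split=> [|[|i]] /=; [lia|lia|]. move=> Hi; exact: IH2.
Qed.

Lemma rowins_pos x r j : j <= size r -> (forall i, i < j -> nth 0 r i <= x) ->
  j < size (rowins x r).2 /\ nth 0 (rowins x r).2 j <= x.
Proof.
elim: r j => [|y r IH] j /=.
  by case: j.
move=> Hj Hi; case: ifP => Hxy /=.
  case: j Hj Hi => [|j] //= Hj Hi.
  by have := Hi 0 erefl => /=; lia.
case: (rowins x r) (IH j.-1) => b r'' /= IH'.
case: j Hj Hi IH' => [|j] /= Hj Hi IH'; first lia.
have [] := IH' Hj (fun i hi => Hi i.+1 hi); done.
Qed.

Definition row1 (s : seq nat) := foldl (fun r x => (rowins x r).2) [::] s.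
Lemma subseq_rconsE (t s : seq nat) x : subseq t (rcons s x) ->
  subseq t s \/ exists t', t = rcons t' x /\ subseq t' s.
Proof.
rewrite -subseq_rev rev_rcons.
have Ht : t = rev (rev t) by rewrite revK.
case E: (rev t) => [|y u] /=.
  by move=> _; left; rewrite Ht E sub0seq.
case: eqP => [Hyx Hu|_ Hu]; first subst y.
  right; exists (rev u); split; first by rewrite Ht E rev_cons.
  by rewrite -subseq_rev revK.
by left; rewrite Ht E -subseq_rev revK.
Qed.

Lemma row1_inv s : sorted leq (row1 s) /\ forall t, subseq t s -> sorted ltn t ->
  t != [::] -> size t <= size (row1 s) /\ nth 0 (row1 s) (size t).-1 <= last 0 t.
Proof.
elim/last_ind: s => [|s x [Hs Hinv]].
  by split=> // t; rewrite subseq0 => /eqP ->.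
rewrite /row1 foldl_rcons -/(row1 s); set r := row1 s in Hs Hinv *.
split; first exact: rowins_sorted.
move=> t Ht Hst Hne.
have [l1 l2] := rowins_le x r.
case: (subseq_rconsE _ _ _ Ht) => [Ht'|[t' [Et Ht']]].
  have [h1 h2] := Hinv t Ht' Hst Hne.
  have Hpos : 0 < size t by case: (t) Hne.
  split; first lia.
  by apply: leq_trans (l2 _ _) h2; lia.
subst t; clear Ht; rewrite size_rcons last_rcons /=.
suff [] : size t' < size (rowins x r).2 /\ nth 0 (rowins x r).2 (size t') <= x by [].
apply: rowins_pos.
  case: t' Ht' Hst {Hne} => [|y u] Ht' Hst; first by [].
  have Hsu : sorted ltn (y :: u).
    by apply: (subseq_sorted ltn_trans _ Hst); apply: subseq_rcons.
  by have [] := Hinv _ Ht' Hsu erefl.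
case: t' Ht' Hst {Hne} => [|y u] Ht' Hst; first by [].
have Hsu : sorted ltn (y :: u).
  by apply: (subseq_sorted ltn_trans _ Hst); apply: subseq_rcons.
have [h1 h2] := Hinv _ Ht' Hsu erefl.
move: Hst; rewrite /= rcons_path => /andP [_ Hlast].
move: h1 h2 => /= h1 h2 i Hi.
apply: leq_trans (_ : nth 0 r (size u) <= x); last first.
  by apply: leq_trans h2 _; apply: ltnW.
apply: (sorted_leq_nth leq_trans leqnn 0 Hs); rewrite ?inE /=; lia.
Qed.

Lemma row1_lis s t : subseq t s -> sorted ltn t -> size t <= size (row1 s).
Proof.
case: t => [|y u] //= Ht Hst.
by have [_ /(_ _ Ht Hst erefl) []] := row1_inv s.
Qed.

Lemma word_fun_cat s1 s2 x : word_fun (s1 ++ s2) x = word_fun s1 (word_fun s2 x).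
Proof. by elim: s1 => [|a s1 IH] //=; rewrite IH. Qed.

Definition incf b m x := if (b <= x) && (x < b + m) then x.+1 else if x == b + m then b else x.
Definition decf b m x := if (b < x) && (x <= b + m) then x.-1 else if x == b then b + m else x.

Lemma word_fun_inc m b x : word_fun (iota b.+1 m) x = incf b m x.
Proof.
elim: m b => [|m IH] b.
  rewrite /incf /=; do ! case: ifP; lia.
rewrite /= IH /sfun /incf /=; do ! case: ifP; lia.
Qed.

Lemma word_fun_dec m b x : word_fun (rev (iota b.+1 m)) x = decf b m x.
Proof.
elim: m b x => [|m IH] b x.
  rewrite /decf /=; do ! case: ifP; lia.
rewrite /= rev_cons -cats1 word_fun_cat IH /= /sfun /decf /=; do ! case: ifP; lia.
Qed.

Lemma run_mono r : is_run r -> all (fun a => 0 < a) r -> exists c, forall x y,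
  x != c -> y != c -> x < y -> word_fun r x < word_fun r y.
Proof.
case=> a [k [Hk Er]] Hall.
have Ha : 0 < a.
  have : a \in r by case: Er => ->; rewrite ?mem_rev mem_iota; lia.
  by move/(allP Hall).
case: a Ha Er {Hall} => [|b] // _ [] ->.
  exists (b + k) => x y Hx Hy Hxy; rewrite !word_fun_inc /incf.
  do ! case: ifP; lia.
exists b => x y Hx Hy Hxy; rewrite !word_fun_dec /decf.
do ! case: ifP; lia.
Qed.

Lemma runs_mono n rs : (forall r, r \in rs -> is_run r) ->
  all (fun a => 0 < a) (flatten rs) ->
  exists P : pred nat, n <= count P (iota 0 n) + size rs /\
    forall x y, P x -> P y -> x < y ->
      word_fun (flatten rs) x < word_fun (flatten rs) y.
Proof.
elim: rs => [|r rs IH] Hr Hall.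
  by exists predT; split; [rewrite count_predT size_iota addn0|move=> x y _ _].
move: Hall; rewrite /= all_cat => /andP [Hr1 Hrs].
have [P [HP Hmono]] := IH (fun r' Hr' => Hr r' (mem_behead (s:=r::rs) Hr')) Hrs.
have [c Hc] := run_mono _ (Hr r (mem_head r rs)) Hr1.
set g := word_fun (flatten rs) in Hmono *.
exists (fun x => P x && (g x != c)); split; last first.
  move=> x y /andP [Px gx] /andP [Py gy] Hxy.
  rewrite /= word_fun_cat word_fun_cat; apply: Hc => //; exact: Hmono.
set F := filter P (iota 0 n).
have E1 : count (fun x => P x && (g x != c)) (iota 0 n) = count (fun x => g x != c) F.
  by rewrite count_filter; apply: eq_count => x /=; rewrite andbC.
have E2 : count (fun x => g x == c) F + count (fun x => g x != c) F = count P (iota 0 n).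
  by rewrite (count_predC (fun x => g x == c) F) size_filter.
have E3 : count (fun x => g x == c) F <= 1.
  have Hu : uniq (map g F).
    rewrite map_inj_in_uniq ?filter_uniq ?iota_uniq //.
    move=> x y; rewrite !mem_filter => /andP [Px _] /andP [Py _] Hg.
    case: (ltngtP x y) => // Hxy.
      by have := Hmono _ _ Px Py Hxy; rewrite Hg ltnn.
    by have := Hmono _ _ Py Px Hxy; rewrite Hg ltnn.
  rewrite -(count_map g (pred1 c)) (count_uniq_mem _ Hu).
  by case: (c \in _).
rewrite E1 /= -E2 in HP *. move: HP E3. set A := count _ F. set B := count _ F. lia.
Qed.

Lemma head_tabins x t : head [::] (tabins x t) = (rowins x (head [::] t)).2.
Proof.
case: t => [|r t] //=.
by case: (rowins x r) => [[y|] r'].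
Qed.

Lemma head_foldl s (t : seq (seq nat)) :
  head [::] (foldl (fun t x => tabins x t) t s) =
  foldl (fun r x => (rowins x r).2) (head [::] t) s.
Proof. by elim: s t => [|x s IH] t //=; rewrite IH head_tabins. Qed.

Lemma head_RS s : head [::] (RS_P s) = row1 s.
Proof. by rewrite /RS_P head_foldl. Qed.

Lemma rowins_size x r : size (rowins x r).2 = size r + ((rowins x r).1 == None).
Proof.
elim: r => [|y r IH] //=.
case: ifP => _ //=; first by rewrite addn0.
by case: (rowins x r) IH => b r'' /= ->.
Qed.

Lemma tabins_sum x t : sumn (map size (tabins x t)) = (sumn (map size t)).+1.
Proof.
elim: t x => [|r t IH] x //=.
have := rowins_size x r.
case: (rowins x r) => [[y|] r'] /= ->; rewrite ?IH /=; lia.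
Qed.

Lemma RS_sum_gen s (t : seq (seq nat)) :
  sumn (map size (foldl (fun t x => tabins x t) t s)) = sumn (map size t) + size s.
Proof.
elim: s t => [|x s IH] t /=; first by rewrite addn0.
by rewrite IH tabins_sum addSnnS.
Qed.

Lemma RS_sum s : sumn (map size (RS_P s)) = size s.
Proof. by rewrite /RS_P RS_sum_gen. Qed.

Lemma shape_facts (P : seq (seq nat)) :
  nth 0 (map size P) 0 = size (head [::] P) /\
  nth 0 (map size P) 0 + nth 0 (map size P) 1 <= sumn (map size P).
Proof. case: P => [|a [|b l]] //=; split=> //; lia. Qed.

Theorem corollary6p3 (n : nat) (v : 'S_n) (k : nat) :
  is_boolean v -> is_run_number v k ->
  n - lambda v 1 <= k /\ lambda v 2 <= k.
Proof.
move=> _ [[rs [Hruns [[[Hlet Hrep] _] Hk]]] _].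
have Hpos : all (fun a => 0 < a) (flatten rs).
  by apply: sub_all Hlet => a /andP [].
have [P [HP Hmono]] := runs_mono n rs Hruns Hpos.
set h := word_fun (flatten rs) in Hmono.
set s := [seq val (v j) | j <- enum 'I_n].
have Es : s = map h (iota 0 n).
  rewrite /s -val_enum_ord -map_comp; apply: eq_map => j /=.
  by rewrite /h Hrep.
have Hsub : subseq (map h (filter P (iota 0 n))) s.
  by rewrite Es; apply: map_subseq; apply: filter_subseq.
have Hsort : sorted ltn (map h (filter P (iota 0 n))).
  apply: (homo_sorted_in (P := fun x => P x)); last first.
    by apply: sorted_filter; [exact: ltn_trans | exact: iota_ltn_sorted].
    exact: filter_all.
  by move=> x y Px Py; apply: Hmono.
have Hlis := row1_lis _ _ Hsub Hsort.
rewrite size_map size_filter in Hlis.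
have [E1 E2] := shape_facts (RS_P s).
have Hsum := RS_sum s.
have Hsz : size s = n by rewrite /s size_map size_enum_ord.
rewrite /lambda /RS_shape -/s /= E1 head_RS.
rewrite /lambda /RS_shape -/s /= E1 head_RS in E2.
rewrite Hsum Hsz in E2.
clearbody s h.
have HPk : n <= count P (iota 0 n) + k by rewrite -Hk.
move: (size (row1 s)) (nth 0 [seq size i | i <- RS_P s] 1) (count P (iota 0 n)) Hlis E2 HPk => a b c Hl He HP'.
split; lia.
Qed.
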